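(* A twisted graph $T=(\vec G,G,\prec,A)$ which has a positive sequence on $F$ is simplicial (on $F$).
   Context: Signed sets on a finite set $E$: pairs $X=(X^+,X^-)$ of disjoint subsets, $X(e)=+1,-1,0$ according as $e\in X^+$, $e\in X^-$, or neither; support $\underline X=X^+\cup X^-$. Conformal: no $e$ with $X(e)=-Y(e)\ne0$; composition $(X\circ Y)(e)=X(e)$ if $X(e)\ne0$, else $Y(e)$. For a total order $<$ on $E$, $\mathcal C(<)=\{(\{e_1,e_3\},\{e_2\}),(\{e_2\},\{e_1,e_3\}):e_1<e_2<e_3\}$ (circuits of the rank 2 oriented matroid $\mathcal M(<)$; vectors are compositions of pairwise conformal families of circuits); for a partial order $\prec$, $\mathcal C(\prec)=\bigcap_{<\supseteq\prec}\mathcal C(<)$. For a directed graph $\vec G=(V,\vec E)$ (no loops, parallel or antiparallel edges), underlying simple graph $G=(V,E)$, a strong map $\mathcal M^*(\vec G)\to\mathcal M(<)$ means every signed minimal cut $(\{(u,w):u\in S,w\notin S\},\{(u,w):w\in S,u\notin S\})$ ($S$, $V\setminus S$ inducing connected subgraphs) is a vector of $\mathcal M(<)$; $C^*_v=(\{(u,v)\in\vec E\},\{(v,u)\in\vec E\})$. A twisted graph $T=(\vec G,G,\prec,A)$: $\prec$ a partial order on $E$, $G$ three-edge-connected, $A\subset\mathcal C(\prec)$, a strong map $\mathcal M^*(\vec G)\to\mathcal M(<)$ for every total $<\supseteq\prec$, and a partition $A=\bigsqcup_v A_v$ with members of $A_v$ pairwise conformal and composing to $C^*_v$. $\boldsymbol\theta\in\mathbb{R}^E$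 respects $\prec$ if $0<\theta_e<180$ (degrees) and $\theta_e<\theta_f$ whenever $e\prec f$. $\Sigma(T)$ is the $|A|\times|E|$ matrix with $\Sigma_{a,e}=0$ if $e\notin\underline a$ and $\Sigma_{a,e}=a(e)\sin(\theta_{e''}-\theta_{e'})$ if $\underline a=\{e,e',e''\}$ with $e'\prec e''$. A matrix with $r+1$ rows and $r$ columns is a simplex if its rows have a linear dependency with all coefficients positive and every row dependency is a multiple of it. $T$ is simplicial on $F$ if for every $\boldsymbol\theta$ respecting $\prec$ the submatrix of $\Sigma(T)$ on columns $F$ is a simplex. A positive sequence for $T$ on $F$ is an enumeration $A=\{a_1,\dots,a_m\}$ ($m=|A|$) and an enumeration $F=\{f_2,\dots,f_m\}\subset E$ of distinct edges such that for each $2\le j\le m$: $a_j(f_j)\ne0$; $a_i(f_j)=0$ for all $i>j$; and $a_i(f_j)\in\{0,-a_j(f_j)\}$ for all $i<j$. *)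

(* Defs.v *)
From HB Require Import structures.
From mathcomp Require Import all_boot all_order all_algebra.
From mathcomp Require Import reals trigo.
Set Implicit Arguments. Unset Strict Implicit. Unset Printing Implicit Defensive.
Import Order.TTheory GRing.Theory Num.Theory.
Local Open Scope ring_scope.

(** * Signed sets on a finite set E: pairs (X^+, X^-) *)
Definition signed (E : finType) := ({set E} * {set E})%type.

Section Signed.
Variable E : finType.
Implicit Types X Y : signed E.

Definition sval X (e : E) : int :=
  if e \in X.1 then 1 else if e \in X.2 then -1 else 0.

Definition supp X : {set E} := X.1 :|: X.2.

Definition conformal X Y : bool :=
  [disjoint X.1 & Y.2] && [disjoint X.2 & Y.1].

(** composition: (X o Y)(e) = X(e) if X(e) <> 0, else Y(e) *)
Definition compose X Y : signed E :=
  (X.1 :|: (Y.1 :\: X.2), X.2 :|: (Y.2 :\: X.1)).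

Definition zero_signed : signed E := (set0, set0).

Definition compose_seq (s : seq (signed E)) : signed E :=
  foldr compose zero_signed s.

Definition strict_partial_order (r : rel E) : Prop :=
  (forall e, ~~ r e e) /\ (forall e f g, r e f -> r f g -> r e g).

Definition strict_total_order (r : rel E) : Prop :=
  strict_partial_order r /\ (forall e f, e != f -> r e f || r f e).

Definition extends (lt prec : rel E) : Prop := forall e f, prec e f -> lt e f.

(** circuits C(<) of the rank 2 oriented matroid M(<) *)
Definition circuit_tot (lt : rel E) X : Prop :=
  exists e1 e2 e3, [/\ lt e1 e2, lt e2 e3 &
    (X = ([set e1; e3], [set e2]) \/ X = ([set e2], [set e1; e3]))].

Definition vector_tot (lt : rel E) X : Prop :=
  exists s : seq (signed E),
    [/\ forall Y, Y \in s -> circuit_tot lt Y, pairwise conformal s &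
        compose_seq s = X].

Definition circuit_po (prec : rel E) X : Prop :=
  forall lt : rel E, strict_total_order lt -> extends lt prec -> circuit_tot lt X.

End Signed.

Section Graph.
Variables (V E : finType) (src dst : E -> V).

Definition simple_digraph : Prop :=
  (forall e, src e != dst e) /\
  (forall e f, [set src e; dst e] = [set src f; dst f] -> e = f).

Definition adj_in (D : {set E}) (S : {set V}) : rel V :=
  fun u w => [&& u \in S, w \in S &
    [exists e in D, ((src e == u) && (dst e == w)) || ((src e == w) && (dst e == u))]].

Definition induces_connected (S : {set V}) : Prop :=
  S != set0 /\ forall u w, u \in S -> w \in S -> connect (adj_in setT S) u w.

Definition three_edge_connected : Prop :=
  forall D : {set E}, (#|D| < 3)%N ->
    forall u w, connect (adj_in (~: D) setT) u w.

Definition signed_cut (S : {set V}) : signed E :=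
  ([set e | (src e \in S) && (dst e \notin S)],
   [set e | (dst e \in S) && (src e \notin S)]).

(** strong map M^*(vec G) -> M(<) : every signed minimal cut is a vector *)
Definition strong_map (lt : rel E) : Prop :=
  forall S : {set V}, induces_connected S -> induces_connected (~: S) ->
    vector_tot lt (signed_cut S).

Definition Cstar (v : V) : signed E :=
  ([set e | dst e == v], [set e | src e == v]).

Definition vertex_partition (A : {set signed E}) : Prop :=
  exists part : signed E -> V, forall v : V,
    let Av := [set a in A | part a == v] in
    (forall x y, x \in Av -> y \in Av -> x != y -> conformal x y) /\
    compose_seq (enum Av) = Cstar v.

Definition twisted_graph (prec : rel E) (A : {set signed E}) : Prop :=
  [/\ simple_digraph /\ strict_partial_order prec,
      three_edge_connected,
      (forall a, a \in A -> circuit_po prec a),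
      (forall lt, strict_total_order lt -> extends lt prec -> strong_map lt) &
      vertex_partition A].

End Graph.

Section Sigma.
Variables (R : realType) (E : finType) (prec : rel E) (A : {set signed E}).

(** theta respects prec (angles in degrees) *)
Definition respects (theta : E -> R) : Prop :=
  (forall e, 0 < theta e < 180) /\ (forall e f, prec e f -> theta e < theta f).

Definition sin_deg (x : R) : R := sin (x * pi / 180).

Definition Sigma_entry (theta : E -> R) (a : signed E) (e : E) : R :=
  if e \notin supp a then 0 else
  match [pick p : E * E | (supp a == [set e; p.1; p.2]) && prec p.1 p.2] with
  | Some p => (sval a e)%:~R * sin_deg (theta p.2 - theta p.1)
  | None => 0
  end.

Definition Sigma (theta : E -> R) : 'M[R]_(#|A|, #|E|) :=
  \matrix_(i < #|A|, j < #|E|) Sigma_entry theta (enum_val i) (enum_val j).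

Definition Sigma_on (theta : E -> R) (F : {set E}) : 'M[R]_(#|A|, #|F|) :=
  colsub (fun j : 'I_#|F| => enum_rank (enum_val j)) (Sigma theta).

End Sigma.

Definition simplex (R : realType) (m n : nat) (M : 'M[R]_(m, n)) : Prop :=
  m = n.+1 /\
  exists2 c : 'rV[R]_m, (forall i, 0 < c 0 i) /\ c *m M = 0 &
    forall d : 'rV[R]_m, d *m M = 0 -> exists k : R, d = k *: c.

Definition simplicial (R : realType) (E : finType) (prec : rel E)
    (A : {set signed E}) (F : {set E}) : Prop :=
  forall theta : E -> R, respects prec theta -> simplex (Sigma_on prec A theta F).

(** positive sequence: A = {a_1,...,a_{n+1}} (here a : 'I_n.+1, a_1 = a ord0),
    F = {f_2,...,f_{n+1}} (here f : 'I_n, f j is paired with a (lift ord0 j)) *)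
Definition positive_sequence (E : finType) (A : {set signed E}) (F : {set E}) : Prop :=
  exists n (a : 'I_n.+1 -> signed E) (f : 'I_n -> E),
    [/\ injective a, A = [set a i | i in 'I_n.+1],
        injective f, F = [set f j | j in 'I_n] &
        forall j : 'I_n, let J := lift ord0 j in
        [/\ sval (a J) (f j) != 0,
            forall i : 'I_n.+1, (J < i)%N -> sval (a i) (f j) = 0 &
            forall i : 'I_n.+1, (i < J)%N ->
              sval (a i) (f j) \in [:: 0; - sval (a J) (f j)]]].

(* Main.v *)
Require Import Defs.
From HB Require Import structures.
From mathcomp Require Import all_boot all_order all_algebra.
From mathcomp Require Import reals trigo.
From mathcomp Require Import lra ring.
Set Implicit Arguments. Unset Strict Implicit. Unset Printing Implicit Defensive.

Section Ord.
Variable E : finType.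

Lemma linext (P : rel E) : strict_partial_order P ->
  exists lt : rel E, strict_total_order lt /\ extends lt P.
Proof.
move=> [irr tr].
pose rk e := #|[set x | P x e]|.
exists (fun e f => (rk e < rk f) || ((rk e == rk f) && (enum_rank e < enum_rank f))).
split; [split; [split|]|].
- by move=> e; rewrite ltnn eqxx ltnn.
- move=> e f g /orP[h1|/andP[/eqP h1 h1']] /orP[h2|/andP[/eqP h2 h2']].
  + by rewrite (ltn_trans h1 h2).
  + by rewrite -h2 h1.
  + by rewrite h1 h2.
  + by rewrite h1 h2 eqxx (ltn_trans h1' h2') orbT.
- move=> e f ne; case: (ltngtP (rk e) (rk f)) => [h|h|h]; rewrite ?h ?orbT //.
  rewrite /=; case: (ltngtP (enum_rank e) (enum_rank f)) => // /val_inj/enum_rank_inj h'.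
  by rewrite h' eqxx in ne.
- move=> e f pef; apply/orP; left; apply: proper_card; apply/properP; split.
  + by apply/subsetP => x; rewrite !inE => h; apply: tr h pef.
  + by exists e; rewrite !inE // (negbTE (irr e)).
Qed.

Definition addp (P : rel E) (x y : E) : rel E :=
  fun u v => P u v || (((u == x) || P u x) && ((y == v) || P y v)).

Lemma addp_spo (P : rel E) x y : strict_partial_order P -> x != y -> ~~ P y x ->
  strict_partial_order (addp P x y).
Proof.
move=> [irr tr] nxy nPyx; split.
- move=> u; rewrite /addp (negbTE (irr u)) /=; apply/negP => /andP[h1 h2].
  move: h1 h2; case/orP => [/eqP->|h1]; case/orP => [/eqP h2|h2].
  + by rewrite h2 eqxx in nxy.
  + by rewrite h2 in nPyx.
  + by rewrite h2 h1 in nPyx.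
  + by rewrite (tr _ _ _ h2 h1) in nPyx.
- move=> u v w; rewrite /addp.
  have T1 a b : (a == x) || P a x -> P b a -> (b == x) || P b x.
    by case/orP => [/eqP->|h] h'; rewrite ?h' ?orbT // (tr _ _ _ h' h) orbT.
  have T2 a b : (y == a) || P y a -> P a b -> (y == b) || P y b.
    by case/orP => [/eqP->|h] h'; rewrite ?h' ?orbT // (tr _ _ _ h h') orbT.
  case/orP => [h1|/andP[h1 h1']]; case/orP => [h2|/andP[h2 h2']].
  + by rewrite (tr _ _ _ h1 h2).
  + by rewrite (T1 _ _ h2 h1) h2' orbT.
  + by rewrite h1 (T2 _ _ h1' h2) orbT.
  + exfalso; move: h1' h2; case/orP => [/eqP<-|h] ; case/orP => [/eqP h'|h'].
    * by rewrite h' eqxx in nxy.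
    * by rewrite h' in nPyx.
    * by rewrite -h' h in nPyx.
    * by rewrite (tr _ _ _ h h') in nPyx.
Qed.

Lemma addp_ext (P : rel E) x y : extends (addp P x y) P.
Proof. by move=> u v h; rewrite /addp h. Qed.

Lemma addp_xy (P : rel E) x y : addp P x y x y.
Proof. by rewrite /addp !eqxx orbT. Qed.

Lemma ext_trans (l Q P : rel E) : extends l Q -> extends Q P -> extends l P.
Proof. by move=> h1 h2 u v /h2/h1. Qed.

Lemma linext_xy (P : rel E) x y : strict_partial_order P -> x != y -> ~~ P y x ->
  exists lt : rel E, [/\ strict_total_order lt, extends lt P & lt x y].
Proof.
move=> sp nxy nP; have [lt [tot ext]] := linext (addp_spo sp nxy nP).
exists lt; split => //; first exact: ext_trans ext (@addp_ext P x y).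
exact: ext (addp_xy P x y).
Qed.

End Ord.

Section Circ.
Variable E : finType.

Lemma circ_tot_shape (lt : rel E) (a : signed E) : strict_total_order lt ->
  circuit_tot lt a -> exists x m y, [/\ lt x m, lt m y, [&& x != m, m != y & x != y] &
    a = ([set x; y], [set m]) \/ a = ([set m], [set x; y])].
Proof.
move=> [[irr tr] _] [x [m [y [h1 h2 h3]]]]; exists x, m, y; split => //.
apply/and3P; split; apply/negP => /eqP e.
- by rewrite e (negbTE (irr m)) in h1.
- by rewrite e (negbTE (irr y)) in h2.
- by rewrite e in h1; have := tr _ _ _ h2 h1; rewrite (negbTE (irr m)).
Qed.

Lemma mid_prop (lt : rel E) (a : signed E) x m y :
  [&& x != m, m != y & x != y] ->
  (a = ([set x; y], [set m]) \/ a = ([set m], [set x; y])) ->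
  strict_total_order lt -> circuit_tot lt a ->
  (lt x m && lt m y) || (lt y m && lt m x).
Proof.
move=> /and3P[nxm nmy nxy] ha tot ca.
have [g1 [g2 [g3 [l1 l2 /and3P[n12 n23 n13] hg]]]] := circ_tot_shape tot ca.
have key : [set x; y] = [set g1; g3] -> m = g2 -> (lt x m && lt m y) || (lt y m && lt m x).
  move=> e ->; have : x \in [set g1; g3] by rewrite -e !inE eqxx.
  have : y \in [set g1; g3] by rewrite -e !inE eqxx orbT.
  rewrite !inE => /orP[/eqP hy|/eqP hy] /orP[/eqP hx|/eqP hx]; subst.
  - by rewrite eqxx in nxy.
  - by rewrite l1 l2 orbT.
  - by rewrite l1 l2.
  - by rewrite eqxx in nxy.
have cross : [set x; y] = [set g2] -> False.
  move=> e; have : x \in [set g2] by rewrite -e !inE eqxx.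
  have : y \in [set g2] by rewrite -e !inE eqxx orbT.
  by rewrite !inE => /eqP hy /eqP hx; rewrite hx hy eqxx in nxy.
case: ha hg => -> [] [] e1 e2.
- by apply: key => //; apply/set1_inj.
- by exfalso; apply: cross.
- by exfalso; apply: cross; rewrite e2.
- by apply: key => //; apply/set1_inj.
Qed.

Definition MP (P : rel E) x m y := forall lt, strict_total_order lt -> extends lt P ->
  (lt x m && lt m y) || (lt y m && lt m x).

Lemma tot_contra (lt : rel E) u v : strict_total_order lt -> lt u v -> lt v u -> False.
Proof. by move=> [[irr tr] _] h1 h2; have := tr _ _ _ h1 h2; rewrite (negbTE (irr u)). Qed.

Lemma comp_m (P : rel E) x m y : strict_partial_order P -> MP P x m y ->
  [&& x != m, m != y & x != y] -> P x m || P m x.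
Proof.
move=> sp mp /and3P[nxm nmy nxy]; apply/negPn/negP; rewrite negb_or => /andP[n1 n2].
have spa := addp_spo sp nxm n2.
have nmx : m != x by rewrite eq_sym.
have nym : y != m by rewrite eq_sym.
case hb: (addp P x m m y).
- have hmy : P m y.
    move: hb; rewrite /addp eq_sym (negbTE nxm) (negbTE n2) /=; by rewrite orbF.
  have [lt [tot ext lmx]] := linext_xy sp (nmx) n1.
  have := mp lt tot ext; case/orP => /andP[h1 h2].
  + exact: tot_contra tot lmx h1.
  + exact: tot_contra tot (ext _ _ hmy) h1.
- have [lt [tot ext lym]] := linext_xy spa nym (negbT hb).
  have ext0 := ext_trans ext (@addp_ext E P x m).
  have lxm : lt x m := ext _ _ (addp_xy P x m).
  have := mp lt tot ext0; case/orP => /andP[h1 h2].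
  + exact: tot_contra tot lym h2.
  + exact: tot_contra tot lxm h2.
Qed.

End Circ.

Section Circ2.
Variable E : finType.

Lemma chain_pick (P : rel E) x m y e : P x m -> P m y -> P x y ->
  e \in [set x; y] :|: [set m] ->
  exists p : E * E, ([set x; y] :|: [set m] == [set e; p.1; p.2]) && P p.1 p.2.
Proof.
move=> h1 h2 h3; rewrite !inE => /orP[/orP[]|] /eqP ->.
- exists (m, y); rewrite h2 andbT; apply/eqP/setP => z; rewrite !inE.
  by case: (z == x); case: (z == y); case: (z == m).
- exists (x, m); rewrite h1 andbT; apply/eqP/setP => z; rewrite !inE.
  by case: (z == x); case: (z == y); case: (z == m).
- exists (x, y); rewrite h3 andbT; apply/eqP/setP => z; rewrite !inE.
  by case: (z == x); case: (z == y); case: (z == m).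
Qed.

Lemma circ_pick (P : rel E) (a : signed E) : strict_partial_order P -> circuit_po P a ->
  (forall e, e \in supp a -> exists p : E * E, (supp a == [set e; p.1; p.2]) && P p.1 p.2)
  /\ (forall e, e \in a.1 -> e \notin a.2).
Proof.
move=> sp ca; have [lt0 [tot0 ext0]] := linext sp.
have [x [m [y [_ _ dist ha]]]] := circ_tot_shape tot0 (ca _ tot0 ext0).
have mp1 : MP P x m y := fun lt tot ext => mid_prop dist ha tot (ca _ tot ext).
have mp2 : MP P y m x.
  by move=> lt tot ext; rewrite orbC; apply: mp1.
move: (dist) => /and3P[nxm nmy nxy].
have dist2 : [&& y != m, m != x & y != x] by rewrite (eq_sym y m) (eq_sym m x) (eq_sym y x) nxm nmy nxy.
have c1 := comp_m sp mp1 dist; have c2 := comp_m sp mp2 dist2.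
have hs : supp a = [set x; y] :|: [set m].
  by rewrite /supp; case: ha => ->; rewrite //= setUC.
have hs' : supp a = [set y; x] :|: [set m].
  by rewrite hs [[set y; x]]setUC.
have [irr tr] := sp.
split.
- move=> e; rewrite hs.
  case/orP: c1 => h1; case/orP: c2 => h2.
  + have [lt [tot ext]] := linext sp.
    have := mp1 lt tot ext; case/orP => /andP[l1 l2].
    * by case: (tot_contra tot (ext _ _ h2) l2).
    * by case: (tot_contra tot (ext _ _ h1) l2).
  + by apply: chain_pick h1 h2 (tr _ _ _ h1 h2).
  + by rewrite -hs hs'; apply: chain_pick h2 h1 (tr _ _ _ h2 h1).
  + have [lt [tot ext]] := linext sp.
    have := mp1 lt tot ext; case/orP => /andP[l1 l2].
    * by case: (tot_contra tot (ext _ _ h1) l1).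
    * by case: (tot_contra tot (ext _ _ h2) l1).
- move=> e; case: ha => -> /=; rewrite !inE.
  + by case/orP => /eqP ->; rewrite ?[y == m]eq_sym.
  + by move/eqP ->; rewrite negb_or (eq_sym m x) nxm nmy.
Qed.

End Circ2.

Import Order.TTheory GRing.Theory Num.Theory.
Local Open Scope ring_scope.
Local Notation sv := Defs.sval.

Section Core.
Variables (R : realFieldType) (p q : nat) (M : 'M[R]_(p, q)).
Variables (r : 'I_p -> nat) (piv : 'I_q -> 'I_p) (i0 : 'I_p).
Hypotheses (rinj : injective r) (r0 : r i0 = 0%N)
  (rsurj : forall i, r i != 0%N -> exists k, piv k = i)
  (hdiag : forall k, M (piv k) k != 0)
  (hbelow : forall k i, (r (piv k) < r i)%N -> M i k = 0)
  (habove : forall k i, (r i < r (piv k))%N -> M i k * M (piv k) k <= 0)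
  (hwit : forall k, exists i, (r i < r (piv k))%N /\ M i k != 0).

Lemma colsum (d : 'rV[R]_p) k : d *m M = 0 -> \sum_i d 0 i * M i k = 0.
Proof. by move/rowP/(_ k); rewrite !mxE. Qed.

Lemma kerZ (d : 'rV[R]_p) : d *m M = 0 -> d 0 i0 = 0 -> forall i, d 0 i = 0.
Proof.
move=> hd h0.
suff H : forall t i, r i = t -> d 0 i = 0 by move=> i; exact: H.
elim/ltn_ind => t IH i rit.
have [rz|rnz] := eqVneq (r i) 0%N.
  by have -> : i = i0 by apply: rinj; rewrite rz r0.
have [k pk] := rsurj rnz; subst i.
have := colsum k hd; rewrite (bigD1 (piv k)) //= big1 ?addr0.
  by move/eqP; rewrite mulf_eq0 (negbTE (hdiag k)) orbF => /eqP.
move=> l nl; case: (ltngtP (r l) (r (piv k))) => hl.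
- by rewrite (IH (r l)) ?mul0r // -rit.
- by rewrite hbelow ?mulr0.
- by move/rinj: hl => hl; rewrite hl eqxx in nl.
Qed.

Lemma kerP (d : 'rV[R]_p) : d *m M = 0 -> 0 < d 0 i0 -> forall i, 0 < d 0 i.
Proof.
move=> hd h0.
suff H : forall t i, r i = t -> 0 < d 0 i by move=> i; exact: H.
elim/ltn_ind => t IH i rit.
have [rz|rnz] := eqVneq (r i) 0%N.
  by have -> : i = i0 by apply: rinj; rewrite rz r0.
have [k pk] := rsurj rnz; subst i.
have := colsum k hd; rewrite (bigD1 (piv k)) //= => /eqP; rewrite addr_eq0 => /eqP hs.
set Mk := M (piv k) k.
have hsq : 0 < Mk * Mk by rewrite -expr2 exprn_even_gt0 //= hdiag.
have : 0 < d 0 (piv k) * Mk * Mk.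
  rewrite hs mulNr mulr_suml -sumrN.
  have [l [hl hl0]] := hwit k.
  have nl : l != piv k by apply/eqP => e; rewrite e ltnn in hl.
  rewrite (bigD1 l) //=.
  have Hterm : forall j, j != piv k -> 0 <= - (d 0 j * M j k * Mk).
    move=> j nj; case: (ltngtP (r j) (r (piv k))) => hj.
    + rewrite -mulrA oppr_ge0 pmulr_rle0 ?habove //.
      by apply: (IH (r j)) => //; rewrite -rit.
    + by rewrite hbelow ?mulr0 ?mul0r ?oppr0.
    + by move/rinj: hj => hj; rewrite hj eqxx in nj.
  apply: (@lt_le_trans _ _ (- (d 0 l * M l k * Mk))).
    rewrite -mulrA oppr_gt0 pmulr_rlt0; last by apply: (IH (r l)) => //; rewrite -rit.
    rewrite lt_neqAle habove // andbT mulf_eq0 negb_or hl0 /=; exact: hdiag.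
  rewrite lerDl; apply: sumr_ge0 => j /andP[nj _]; exact: Hterm.
by rewrite -mulrA pmulr_lgt0.
Qed.

Hypothesis hqp : (q < p)%N.

Lemma core :
  exists2 c : 'rV[R]_p, (forall i, 0 < c 0 i) /\ c *m M = 0 &
    forall d : 'rV[R]_p, d *m M = 0 -> exists k : R, d = k *: c.
Proof.
have hk : kermx M != 0.
  rewrite -mxrank_eq0 mxrank_ker subn_eq0 -ltnNge.
  exact: leq_ltn_trans (rank_leq_col M) hqp.
have [i hi] : exists i, row i (kermx M) != 0.
  apply/existsP; apply: contraR hk; rewrite negb_exists => /forallP h.
  apply/eqP/row_matrixP => i; rewrite row0; exact/eqP/negbNE.
set d := row i (kermx M).
have hd : d *m M = 0 by rewrite -row_mul mulmx_ker row0.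
have hd0 : d 0 i0 != 0.
  apply: contra hi => /eqP h; apply/eqP/rowP => j; rewrite [RHS]mxE; exact: kerZ hd h j.
set c := (d 0 i0)^-1 *: d.
have hc : c *m M = 0 by rewrite -scalemxAl hd scaler0.
have hc0 : c 0 i0 = 1 by rewrite mxE mulVf.
exists c; first by split => //; apply: kerP => //; rewrite hc0 ltr01.
move=> e he; exists (e 0 i0).
have he' : (e - e 0 i0 *: c) *m M = 0 by rewrite mulmxBl -scalemxAl he hc scaler0 subr0.
apply/eqP; rewrite -subr_eq0; apply/eqP/rowP => j; rewrite [RHS]mxE.
apply: (kerZ he') j.
have -> : (e - e 0 i0 *: c) 0 i0 = e 0 i0 - e 0 i0 * c 0 i0 by rewrite !mxE.
by rewrite hc0 mulr1 subrr.
Qed.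

End Core.

Section G.
Variable E : finType.

Lemma comp_in1 (s : seq (signed E)) x : x \in (compose_seq s).1 -> exists2 X, X \in s & x \in X.1.
Proof.
elim: s => [|X s IH] /=; first by rewrite inE.
rewrite !inE => /orP[h|/andP[_ /IH [Y hY hx]]]; first by exists X; rewrite ?inE ?eqxx.
by exists Y; rewrite // inE hY orbT.
Qed.

Lemma comp_in2 (s : seq (signed E)) x : x \in (compose_seq s).2 -> exists2 X, X \in s & x \in X.2.
Proof.
elim: s => [|X s IH] /=; first by rewrite inE.
rewrite !inE => /orP[h|/andP[_ /IH [Y hY hx]]]; first by exists X; rewrite ?inE ?eqxx.
by exists Y; rewrite // inE hY orbT.
Qed.

Lemma sval_supp (X : signed E) e : (sv X e == 0) = (e \notin supp X).
Proof. by rewrite /Defs.sval /supp inE; case: (e \in X.1); case: (e \in X.2). Qed.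

Lemma sval_cases (X : signed E) e : [\/ sv X e = 1, sv X e = -1 | sv X e = 0].
Proof. by rewrite /Defs.sval; case: (e \in X.1); case: (e \in X.2); [apply: Or31|apply: Or31|apply: Or32|apply: Or33]. Qed.

End G.

Lemma graph_signs (V E : finType) (src dst : E -> V) (A : {set signed E}) e :
  vertex_partition src dst A ->
  (exists2 b, b \in A & e \in b.1) /\ (exists2 b, b \in A & e \in b.2).
Proof.
move=> [part H]; split.
- have [_ hc] := H (dst e).
  have : e \in (Cstar src dst (dst e)).1 by rewrite inE.
  rewrite -hc => /comp_in1 [X]; rewrite mem_enum inE => /andP[hX _] hx.
  by exists X.
- have [_ hc] := H (src e).
  have : e \in (Cstar src dst (src e)).2 by rewrite inE.
  rewrite -hc => /comp_in2 [X]; rewrite mem_enum inE => /andP[hX _] hx.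
  by exists X.
Qed.

Lemma sin_deg_gt0 (R : realType) (x : R) : 0 < x < 180 -> 0 < sin_deg x.
Proof.
move=> /andP[h1 h2]; rewrite /sin_deg; apply: sin_gt0_pi.
have hp : 0 < pi :> R := pi_gt0 R.
apply/andP; split.
- by apply: divr_gt0 => //; apply: mulr_gt0.
- rewrite ltr_pdivrMr //; nra.
Qed.

Lemma entry_form (R : realType) (E : finType) (prec : rel E) (A : {set signed E})
  (theta : E -> R) (a : signed E) e :
  strict_partial_order prec -> circuit_po prec a -> respects prec theta ->
  exists2 w, 0 < w & Sigma_entry prec theta a e = (sv a e)%:~R * w.
Proof.
move=> sp ca [hr1 hr2]; rewrite /Sigma_entry.
case: ifP => he.
  by exists 1 => //; move: he; rewrite -sval_supp => /eqP ->; rewrite mul0r.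
have [hpick _] := circ_pick sp ca.
case: pickP => [pp /andP[_ hp]|hn].
  exists (sin_deg (theta pp.2 - theta pp.1)) => //; apply: sin_deg_gt0.
  have := hr2 _ _ hp; have := hr1 pp.1; have := hr1 pp.2.
  move=> /andP[a1 a2] /andP[b1 b2] c; apply/andP; split; lra.
exfalso; have [pp hp] := hpick e (negbFE he).
by have := hn pp; rewrite hp.
Qed.

Theorem mainTheorem15 (R : realType) (V E : finType) (src dst : E -> V)
    (prec : rel E) (A : {set signed E}) (F : {set E}) :
  twisted_graph src dst prec A ->
  positive_sequence A F ->
  simplicial R prec A F.
Proof.
move=> [[_ sp] _ hcirc _ hpart] [n [a [f [ainj hA finj hF hseq]]]] theta hth.
have cardA : #|A| = n.+1 by rewrite hA card_imset // card_ord.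
have cardF : #|F| = n by rewrite hF card_imset // card_ord.
split; first by rewrite cardA cardF.
have aA s : a s \in A by rewrite hA imset_f.
have fF j : f j \in F by rewrite hF imset_f.
have [sig hsig] : exists sig : 'I_#|A| -> 'I_n.+1, forall i, a (sig i) = enum_val i.
  apply: (@fin_all_exists _ (fun _ => 'I_n.+1) (fun i s => a s = enum_val i)) => i.
  have := enum_valP i; rewrite {2}hA => /imsetP[s _ hs].
  by exists s.
have [jf hjf] : exists jf : 'I_#|F| -> 'I_n, forall k, f (jf k) = enum_val k.
  apply: (@fin_all_exists _ (fun _ => 'I_n) (fun k s => f s = enum_val k)) => k.
  have := enum_valP k; rewrite {2}hF => /imsetP[s _ hs].
  by exists s.
pose rowof s := enum_rank_in (aA ord0) (a s).
have hrowof s : enum_val (rowof s) = a s by rewrite /rowof enum_rankK_in.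
have sigrow s : sig (rowof s) = s by apply: ainj; rewrite hsig hrowof.
pose colof j := enum_rank_in (fF j) (f j).
have hcolof j : enum_val (colof j) = f j by rewrite /colof enum_rankK_in.
have jfcol j : jf (colof j) = j by apply: finj; rewrite hjf hcolof.
set M := Sigma_on prec A theta F.
have ME i k : M i k = Sigma_entry prec theta (a (sig i)) (f (jf k)).
  by rewrite /M /Sigma_on /Sigma !mxE enum_rankK hsig hjf.
have ef i k : exists2 w, 0 < w & M i k = (sv (a (sig i)) (f (jf k)))%:~R * w.
  by rewrite ME; apply: entry_form => //; apply: hcirc.
have Mnz i k : (M i k != 0) = (sv (a (sig i)) (f (jf k)) != 0).
  have [w wp ->] := ef i k; rewrite mulf_eq0 negb_or intr_eq0 (gt_eqF wp) andbT //.
pose r i := val (sig i).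
pose piv k := rowof (lift ord0 (jf k)).
have rpiv k : r (piv k) = val (lift ord0 (jf k)) by rewrite /r /piv sigrow.
apply: (@core _ _ _ M r piv (rowof ord0)).
- move=> i i' /val_inj h; apply: enum_val_inj; by rewrite -!hsig h.
- by rewrite /r sigrow.
- move=> i hi; case: (unliftP ord0 (sig i)) => [j hj|h]; last first.
    by move: hi; rewrite /r h.
  exists (colof j); apply: enum_val_inj; by rewrite /piv jfcol -hj hrowof hsig.
- move=> k; rewrite Mnz /piv sigrow; by have [h _ _] := hseq (jf k).
- move=> k i; rewrite rpiv /r => hlt.
  have [w _ ->] := ef i k; have [_ h _] := hseq (jf k); by rewrite h // mul0r.
- move=> k i; rewrite rpiv /r => hlt.
  have [w1 w1p ->] := ef i k; have [w2 w2p ->] := ef (piv k) k.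
  rewrite /piv sigrow; have [hnz _ h] := hseq (jf k).
  move: (h _ hlt) hnz; set s := sv (a (lift ord0 (jf k))) (f (jf k)).
  rewrite !inE => /orP[/eqP->|/eqP->] hnz.
    by rewrite mul0r mul0r.
  have hs : (s%:~R : R) != 0 by rewrite intr_eq0.
  have hs2 : 0 < (s%:~R : R) * s%:~R by rewrite -expr2 exprn_even_gt0.
  rewrite intrN.
  have -> : - (s%:~R : R) * w1 * (s%:~R * w2) = - ((s%:~R * s%:~R) * (w1 * w2)) by ring.
  by rewrite oppr_le0 ltW // mulr_gt0 // mulr_gt0.
- move=> k; set j := jf k; have [hnz hgt hlt] := hseq j.
  set J := lift ord0 j.
  have [b hb hbs] : exists2 b, b \in A & sv b (f j) = - sv (a J) (f j).
    have [[b1 hb1 e1] [b2 hb2 e2]] := graph_signs (f j) hpart.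
    have [_ disj] := circ_pick sp (hcirc _ hb1).
    have [_ disj2] := circ_pick sp (hcirc _ hb2).
    case: (sval_cases (a J) (f j)) => hv; last by rewrite hv eqxx in hnz.
    + exists b2 => //; rewrite hv /Defs.sval e2.
      case: ifP => // h1; have [_ dd] := circ_pick sp (hcirc _ hb2).
      by have := dd _ h1; rewrite e2.
    + by exists b1 => //; rewrite hv /Defs.sval e1.
  have hb2 : b \in [set a i | i in 'I_n.+1] by rewrite -hA.
  case/imsetP: hb2 => t _ ht; subst b.
  exists (rowof t); rewrite Mnz sigrow rpiv /r sigrow -/j hbs oppr_eq0 hnz; split => //.
  idtac.
  case: (ltngtP t J) => // h.
    by have := hgt _ h; rewrite hbs => /eqP; rewrite oppr_eq0 (negbTE hnz).
  move/val_inj: h => h; subst t; move/eqP: hbs; rewrite -addr_eq0 -mulr2n mulrn_eq0 /=.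
  by rewrite (negbTE hnz).
- by rewrite cardA cardF.
Qed.
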